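(* Let $(\mathcal{L},\mathcal{O})$ be a linear encoding of a maximization problem, fix a dimension $d$, and let $P, Q \subseteq \mathbb{R}^d$ be the associated pair, where $P = \mathrm{conv}\{x \in \{0,1\}^d \mid x \in \mathcal{L}\}$ and $Q = \{x \in \mathbb{R}^d \mid w^\intercal x \leqslant \max\{w^\intercal z \mid z \in P\}\ \forall w \in \mathcal{O}\cap \mathbb{R}^d\}$; assume $Q$ is a polyhedron, given by a finite system $Ax \leqslant b$. Let $\rho \geqslant 1$, and let $S^{P,\rho Q}$ be the slack matrix of the pair $P, \rho Q$ with respect to a finite inner description of $P$ and the outer description $\rho Q = \{x \mid Ax \leqslant \rho b\}$. Then the minimum size of a $\rho$-approximate EF of the problem (with respect to this linear encoding) equals $\operatorname{rank}_+(S^{P,\rho Q}) + c$ for some $c \in \{0,-1\}$ (i.e. it lies between $\operatorname{rank}_+(S^{P,\rho Q})-1$ and $\operatorname{rank}_+(S^{P,\rho Q})$). Analogously, for a minimization problem, with $Q = \{x \mid w^\intercal x \geqslant \min\{w^\intercal z \mid z\in P\}\ \forall w \in \mathcal{O}\cap\mathbb{R}^d\}$ polyhedral, the minimum size of a $\rho$-approximate EF is $\operatorname{rank}_+(S^{P,\rho^{-1}Q})$ or $\operatorname{rank}_+(S^{P,\rho^{-1}Q})-1$.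
   Context: A linear encoding of a problem is a pair $(\mathcal{L},\mathcal{O})$ with $\mathcal{L} \subseteq \{0,1\}^*$ (feasible solutions) and $\mathcal{O}\subseteq \mathbb{R}^*$ (admissible objective functions). For a maximization problem, a $\rho$-approximate extended formulation (EF) is a system $Ex + Fy = g$, $y \geqslant \mathbf{0}$, $(x,y)\in\mathbb{R}^{d+r}$, whose projection $K = \{x \mid \exists y: Ex+Fy=g, y \geqslant \mathbf 0\}$ satisfies $\max_{x\in K} w^\intercal x \geqslant \max_{x \in P} w^\intercal x$ for all $w \in \mathbb{R}^d$ and $\max_{x\in K} w^\intercal x \leqslant \rho\max_{x \in P} w^\intercal x$ for all $w \in \mathcal{O}\cap\mathbb{R}^d$; equivalently $P \subseteq K \subseteq \rho Q$. For minimization, the conditions are $\min_K w^\intercal x \leqslant \min_P w^\intercal x$ for all $w$ and $\min_K w^\intercal x \geqslant \rho^{-1}\min_P w^\intercal x$ for $w \in \mathcal{O}\cap\mathbb{R}^d$; equivalently $P \subseteq K \subseteq \rho^{-1}Q$. The size of the EF is $r$. For polyhedra $P = \mathrm{conv}\{v_1,\dots,v_n\}+\mathrm{cone}\{r_1,\dots,r_k\}$ and $Q' = \{x \mid A_ix \leqslant b_i, i \in [m]\}$ with $P\subseteq Q'$, the slack matrix $S^{P,Q'}$ is the $m\times(n+k)$ matrix with entries $b_i - A_iv_j$ (vertex columns) and $-A_ir_j$ (ray columns); a system of the form $Ax \geqslant b$ is rewritten as $-Ax \leqslant -b$. $\operatorname{rank}_+(M)$ is the nonnegative rank: the minimum $r$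 with $M = TU$, $T,U\geqslant 0$ of inner dimension $r$ ($0$ for the zero matrix). *)

(* Defs.v *)
From HB Require Import structures.
From mathcomp Require Import all_boot all_order all_algebra.
From mathcomp Require Import reals.
Set Implicit Arguments. Unset Strict Implicit. Unset Printing Implicit Defensive.
Import Order.TTheory GRing.Theory Num.Theory.
Local Open Scope ring_scope.

Section Defs.
Variables (R : realType) (d : nat).

Definition dot (w x : 'cV[R]_d) : R := \sum_(i < d) w i 0 * x i 0.

Definition conv_set (S : 'cV[R]_d -> Prop) (x : 'cV[R]_d) : Prop :=
  exists (n : nat) (v : 'I_n -> 'cV[R]_d) (l : 'I_n -> R),
    [/\ forall i, S (v i), forall i, 0 <= l i, \sum_(i < n) l i = 1
      & x = \sum_(i < n) l i *: v i].

Definition conv_pts (n : nat) (V : 'I_n -> 'cV[R]_d) : 'cV[R]_d -> Prop :=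
  conv_set (fun y => exists j, y = V j).

(* x in {0,1}^d is a feasible solution: it is the 0/1 vector of a bit
   string of length d lying in L *)
Definition feasible (L : seq bool -> Prop) (x : 'cV[R]_d) : Prop :=
  exists s : seq bool, [/\ size s = d, L s
    & forall i : 'I_d, x i 0 = (nth false s i)%:R].

Definition Pset (L : seq bool -> Prop) : 'cV[R]_d -> Prop :=
  conv_set (feasible L).

Definition inO (O : seq R -> Prop) (w : 'cV[R]_d) : Prop :=
  O [seq w i 0 | i <- enum 'I_d].

(* Q for maximization: w^T x <= max_{z in P} w^T z for all w in O /\ R^d
   (P is a polytope, so the max is attained when P is nonempty;
    max over the empty set is -oo) *)
Definition Qmax (L : seq bool -> Prop) (O : seq R -> Prop) (x : 'cV[R]_d) :=
  forall w, inO O w -> exists z, Pset L z /\ dot w x <= dot w z.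

Definition Qmin (L : seq bool -> Prop) (O : seq R -> Prop) (x : 'cV[R]_d) :=
  forall w, inO O w -> exists z, Pset L z /\ dot w z <= dot w x.

Definition polyhedron (m : nat) (A : 'M[R]_(m, d)) (b : 'cV[R]_m)
  (x : 'cV[R]_d) : Prop := forall i, (A *m x) i 0 <= b i 0.

Definition slack (m n : nat) (A : 'M[R]_(m, d)) (b : 'cV[R]_m)
  (V : 'I_n -> 'cV[R]_d) : 'M[R]_(m, n) :=
  \matrix_(i < m, j < n) (b i 0 - (A *m V j) i 0).

Definition EFproj (k r : nat) (E : 'M[R]_(k, d)) (F : 'M[R]_(k, r))
  (g : 'cV[R]_k) (x : 'cV[R]_d) : Prop :=
  exists y : 'cV[R]_r, (forall i, 0 <= y i 0) /\ E *m x + F *m y = g.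

(* rho-approximate EF for a maximization problem:
   max_K w^T x >= max_P w^T x for all w, and
   max_K w^T x <= rho * max_P w^T x for all w in O /\ R^d *)
Definition approxEF_max (L : seq bool -> Prop) (O : seq R -> Prop) (rho : R)
  (k r : nat) (E : 'M[R]_(k, d)) (F : 'M[R]_(k, r)) (g : 'cV[R]_k) : Prop :=
  (forall w z, Pset L z -> exists x, EFproj E F g x /\ dot w z <= dot w x) /\
  (forall w, inO O w -> forall x, EFproj E F g x ->
     exists z, Pset L z /\ dot w x <= rho * dot w z).

(* rho-approximate EF for a minimization problem:
   min_K w^T x <= min_P w^T x for all w, and
   min_K w^T x >= rho^-1 * min_P w^T x for all w in O /\ R^d *)
Definition approxEF_min (L : seq bool -> Prop) (O : seq R -> Prop) (rho : R)
  (k r : nat) (E : 'M[R]_(k, d)) (F : 'M[R]_(k, r)) (g : 'cV[R]_k) : Prop :=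
  (forall w z, Pset L z -> exists x, EFproj E F g x /\ dot w x <= dot w z) /\
  (forall w, inO O w -> forall x, EFproj E F g x ->
     exists z, Pset L z /\ rho^-1 * dot w z <= dot w x).

Definition min_EF_size_max (L : seq bool -> Prop) (O : seq R -> Prop) (rho : R)
  (r : nat) : Prop :=
  (exists k (E : 'M[R]_(k, d)) (F : 'M[R]_(k, r)) g, approxEF_max L O rho E F g) /\
  (forall k r' (E : 'M[R]_(k, d)) (F : 'M[R]_(k, r')) g,
     approxEF_max L O rho E F g -> (r <= r')%N).

Definition min_EF_size_min (L : seq bool -> Prop) (O : seq R -> Prop) (rho : R)
  (r : nat) : Prop :=
  (exists k (E : 'M[R]_(k, d)) (F : 'M[R]_(k, r)) g, approxEF_min L O rho E F g) /\
  (forall k r' (E : 'M[R]_(k, d)) (F : 'M[R]_(k, r')) g,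
     approxEF_min L O rho E F g -> (r <= r')%N).

End Defs.

Definition nn_factor (R : realType) (m n : nat) (M : 'M[R]_(m, n)) (r : nat) : Prop :=
  exists (T : 'M[R]_(m, r)) (U : 'M[R]_(r, n)),
    [/\ forall i j, 0 <= T i j, forall i j, 0 <= U i j & M = T *m U].

Definition is_nnrank (R : realType) (m n : nat) (M : 'M[R]_(m, n)) (r : nat) : Prop :=
  nn_factor M r /\ forall r', nn_factor M r' -> (r <= r')%N.

(* Main.v *)
Require Import Defs.
From HB Require Import structures.
From mathcomp Require Import all_boot all_order all_algebra.
From mathcomp Require Import reals boolp.
From mathcomp Require Import ring lra zify.
Import Order.TTheory GRing.Theory Num.Theory.
Local Open Scope ring_scope.

Lemma interval_pick (R : realType) (I : finType) (pl pu : pred I) (lo up : I -> R) :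
  (forall i k, pl i -> pu k -> lo i <= up k) ->
  exists x, (forall i, pl i -> lo i <= x) /\ (forall k, pu k -> x <= up k).
Proof.
move=> H.
case: (pickP pl) => [i0 Hi0|Hn].
  case: (arg_maxP lo Hi0) => i Pi Hmax.
  exists (lo i); split; first by move=> j /Hmax.
  by move=> k /(H _ _ Pi).
case: (pickP pu) => [k0 Hk0|Hn2].
  case: (arg_minP up Hk0) => k Pk Hmin.
  exists (up k); split; last by move=> j /Hmin.
  by move=> i; rewrite Hn.
by exists 0; split=> i; rewrite ?Hn ?Hn2.
Qed.

Lemma sum_delta (R : realType) (I : finType) (i0 : I) (f : I -> R) :
  \sum_i (i == i0)%:R * f i = f i0.
Proof.
rewrite (bigD1 i0) //= eqxx mul1r big1 ?addr0 //.
by move=> i /negbTE ->; rewrite mul0r.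
Qed.

Lemma sum_exch (R : realType) (I J : finType) (l : J -> R) (c : J -> I -> R) (f : I -> R) :
  \sum_i (\sum_r l r * c r i) * f i = \sum_r l r * (\sum_i c r i * f i).
Proof.
under eq_bigr do rewrite mulr_suml.
rewrite exchange_big; apply: eq_bigr => r _; rewrite mulr_sumr.
by apply: eq_bigr => i _; rewrite mulrA.
Qed.

Lemma farkas (R : realType) (n : nat) : forall (I : finType) (a : I -> 'I_n -> R) (b : I -> R),
 (exists x : 'I_n -> R, forall i, \sum_j a i j * x j <= b i) \/
 (exists l : I -> R, [/\ forall i, 0 <= l i, forall j, \sum_i l i * a i j = 0
                       & \sum_i l i * b i < 0]).
Proof.
elim: n => [|n IH] I a b.
  case: (boolP [forall i, 0 <= b i]) => [/forallP Hb|/forallPn [i0 Hi0]].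
    by left; exists (fun _ => 0) => i; rewrite big_ord0.
  right; exists (fun i => (i == i0)%:R); split.
  - by move=> i; rewrite ler0n.
  - by case.
  - by rewrite sum_delta ltNge.
pose a0 := fun i => a i ord0.
pose a' := fun i j => a i (lift ord0 j).
pose c : (I + I * I)%type -> I -> R := fun r i' =>
  match r with
  | inl i => if a0 i == 0 then (i' == i)%:R else 0
  | inr (i, k) => if (0 < a0 i) && (a0 k < 0)
                  then - a0 k * (i' == i)%:R + a0 i * (i' == k)%:R else 0
  end.
have c_ge0 : forall r i, 0 <= c r i.
  case=> [i|[i k]] i' /=; first by case: ifP => _; rewrite ?ler0n.
  case: ifP => // /andP [Hi Hk].
  by apply: addr_ge0; apply: mulr_ge0; rewrite ?ler0n // ?oppr_ge0 ltW.
have sum_c : forall r (f : I -> R), \sum_i c r i * f i =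
  match r with
  | inl i => if a0 i == 0 then f i else 0
  | inr (i, k) => if (0 < a0 i) && (a0 k < 0) then - a0 k * f i + a0 i * f k else 0
  end.
  case=> [i|[i k]] f /=.
    case: ifP => _; first exact: sum_delta.
    by rewrite big1 // => j _; rewrite mul0r.
  case: ifP => _; last by rewrite big1 // => j _; rewrite mul0r.
  under eq_bigr do rewrite mulrDl -!mulrA.
  by rewrite big_split /= -!mulr_sumr !sum_delta.
case: (IH _ (fun r j => \sum_i c r i * a' i j) (fun r => \sum_i c r i * b i))
  => [[x' Hx']|[l' [Hl0 Hla Hlb]]]; last first.
  right; exists (fun i => \sum_r l' r * c r i); split.
  - by move=> i; apply: sumr_ge0 => r _; apply: mulr_ge0.
  - move=> j; rewrite sum_exch.
    case: (unliftP ord0 j) => [j'|] ->; first exact: Hla.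
    apply: big1 => r _; rewrite (sum_c r a0).
    case: r => [i|[i k]] /=; first by case: eqP => [->|]; rewrite mulr0.
    case: ifP => _; rewrite ?mulr0 //. by rewrite [a0 i * a0 k]mulrC mulNr addNr mulr0.
  - by rewrite sum_exch.
pose s := fun i => \sum_j a' i j * x' j.
have Hs : forall r, \sum_i c r i * s i <= \sum_i c r i * b i.
  move=> r; apply: le_trans (Hx' r); rewrite le_eqVlt; apply/orP; left; apply/eqP.
  under [RHS]eq_bigr do rewrite mulr_suml.
  rewrite exchange_big; apply: eq_bigr => i _; rewrite /s mulr_sumr.
  by apply: eq_bigr => j _; rewrite mulrA.
have Hcond : forall i k, a0 i < 0 -> 0 < a0 k -> (b i - s i) / a0 i <= (b k - s k) / a0 k.
  move=> i k /= Hi Hk.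
  have := Hs (inr (k, i)); rewrite !sum_c Hk Hi /= => H.
  set u := (b i - s i) / a0 i; set v := (b k - s k) / a0 k.
  have Eu : b i - s i = u * a0 i by rewrite /u mulfVK // lt_eqF.
  have Ev : b k - s k = v * a0 k by rewrite /v mulfVK // gt_eqF.
  have Hp : 0 < - a0 i * a0 k by apply: mulr_gt0; rewrite ?oppr_gt0.
  nra.
have [x0 [Hlo Hup]] := @interval_pick R I (fun i => a0 i < 0) (fun k => 0 < a0 k)
   (fun i => (b i - s i) / a0 i) (fun k => (b k - s k) / a0 k) Hcond.
left; exists (fun j => if unlift ord0 j is Some j' then x' j' else x0) => i.
rewrite big_ord_recl /= unlift_none.
under eq_bigr do rewrite liftK.
rewrite -/(a0 i) -/(s i).
case: (ltrgt0P (a0 i)) => Ha.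
- have := Hup i Ha; set v := (b i - s i) / a0 i => H.
  have Ev : b i - s i = v * a0 i by rewrite /v mulfVK // gt_eqF.
  nra.
- have := Hlo i Ha; set v := (b i - s i) / a0 i => H.
  have Ev : b i - s i = v * a0 i by rewrite /v mulfVK // lt_eqF.
  nra.
- have := Hs (inl i); rewrite !sum_c Ha eqxx => H.
  by rewrite mul0r add0r.
Qed.

Lemma sum_deltaN (R : realType) (I : finType) (i0 : I) (f : I -> R) :
  \sum_i f i * - (i0 == i)%:R = - f i0.
Proof.
rewrite -(@sum_delta R I i0 f) -sumrN; apply: eq_bigr => i _.
by rewrite eq_sym mulrN mulrC.
Qed.

Lemma use1 (R : realType) (k r : nat) (F : 'M[R]_(k,r)) (c : 'I_k -> R) :
 (exists y : 'cV[R]_r, (forall l, 0 <= y l 0) /\ forall p, (F *m y) p 0 = c p) \/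
 (exists u : 'I_k -> R, (forall l, 0 <= \sum_p u p * F p l) /\ \sum_p u p * c p < 0).
Proof.
case: (@farkas R r ('I_r + ('I_k + 'I_k))%type
  (fun i j => match i with inl l => - (j == l)%:R | inr (inl p) => F p j
                         | inr (inr p) => - F p j end)
  (fun i => match i with inl _ => 0 | inr (inl p) => c p | inr (inr p) => - c p end))
  => [[x Hx]|[lam [H0 Hj Hb]]].
- left; exists (\col_l x l); split.
    move=> l; rewrite mxE; have := Hx (inl l) => /=.
    rewrite (eq_bigr (fun j => - ((j == l)%:R * x j))); last by move=> j _; rewrite mulNr.
    by rewrite sumrN sum_delta oppr_le0.
  move=> p; have h1 := Hx (inr (inl p)); have h2 := Hx (inr (inr p)).
  rewrite /= in h1 h2; rewrite mxE; under eq_bigr do rewrite mxE.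
  apply: le_anti; rewrite h1 /=.
  move: h2; under eq_bigr do rewrite mulNr.
  by rewrite sumrN lerN2.
- right; exists (fun p => lam (inr (inl p)) - lam (inr (inr p))); split.
    move=> l; have := Hj l; rewrite !big_sumType /= sum_deltaN.
    have -> : \sum_p (lam (inr (inl p)) - lam (inr (inr p))) * F p l =
       \sum_p lam (inr (inl p)) * F p l + \sum_p lam (inr (inr p)) * - F p l.
      by rewrite -big_split; apply: eq_bigr => p _; rewrite mulrBl mulrN.
    by move/eqP; rewrite addrC subr_eq0 => /eqP ->.
  move: Hb; rewrite !big_sumType /= big1 ?add0r; last by move=> i _; rewrite mulr0.
  have -> : \sum_p (lam (inr (inl p)) - lam (inr (inr p))) * c p =
       \sum_p lam (inr (inl p)) * c p + \sum_p lam (inr (inr p)) * - c p.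
    by rewrite -big_split; apply: eq_bigr => p _; rewrite mulrBl mulrN.
  done.
Qed.

Lemma nra_key (R : realType) (p1 p2 p3 p4 p5 : R) : p1 + p3 * p2 <= (1 + p3 * p4) * p5 ->
  p3 * (p2 - p4 * p5) = p5 - p1 + 1 -> False.
Proof. move=> *; nra. Qed.

Lemma use2 (R : realType) (d k r : nat) (E : 'M[R]_(k,d)) (F : 'M[R]_(k,r)) (g : 'cV[R]_k)
  (a : 'I_d -> R) (c : R) (x0 : 'cV[R]_d) (y0 : 'cV[R]_r) :
  (forall l, 0 <= y0 l 0) -> E *m x0 + F *m y0 = g ->
  (forall (x : 'cV[R]_d) (y : 'cV[R]_r), (forall l, 0 <= y l 0) -> E *m x + F *m y = g -> \sum_q a q * x q 0 <= c) ->
  exists u : 'I_k -> R, [/\ forall q, \sum_p u p * E p q = a q,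
     forall l, 0 <= \sum_p u p * F p l & \sum_p u p * g p 0 <= c].
Proof.
move=> Hy0 Hxy0 Hval.
case: (@farkas R k (('I_d + 'I_d) + ('I_r + 'I_1))%type
  (fun i j => match i with inl (inl q) => E j q | inl (inr q) => - E j q
                         | inr (inl l) => - F j l | inr (inr _) => g j 0 end)
  (fun i => match i with inl (inl q) => a q | inl (inr q) => - a q
                       | inr (inl _) => 0 | inr (inr _) => c end))
  => [[x Hx]|[lam [H0 Hj Hb]]].
  exists x; split.
  - move=> q; have h1 := Hx (inl (inl q)); have h2 := Hx (inl (inr q)).
    rewrite /= in h1 h2; move: h2; under eq_bigr do rewrite mulNr.
    rewrite sumrN lerN2 => h2.
    under eq_bigr do rewrite mulrC.
    by apply: le_anti; rewrite h1 h2.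
  - move=> l; have := Hx (inr (inl l)) => /=.
    under eq_bigr do rewrite mulNr.
    by rewrite sumrN oppr_le0; under eq_bigr do rewrite mulrC.
  - have := Hx (inr (inr ord0)) => /=.
    by under eq_bigr do rewrite mulrC.
exfalso.
pose t := lam (inr (inr ord0)).
have t_ge0 : 0 <= t by apply: H0.
pose xv : 'cV[R]_d := \col_q (lam (inl (inr q)) - lam (inl (inl q))).
pose yv : 'cV[R]_r := \col_l (lam (inr (inl l))).
have Hxyv : E *m xv + F *m yv = t *: g.
  apply/matrixP => p j; rewrite (ord1 j) !mxE.
  have := Hj p; rewrite !big_sumType /= big_ord1 -/t.
  have e1 : \sum_(q < d) E p q * xv q 0 = - (\sum_(i < d) lam (inl (inl i)) * E p i +
      \sum_(i < d) lam (inl (inr i)) * - E p i).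
    rewrite -big_split -sumrN; apply: eq_bigr => q _ /=; rewrite /xv mxE; ring.
  have e2 : \sum_(l < r) F p l * yv l 0 = - \sum_(i < r) lam (inr (inl i)) * - F p i.
    rewrite -sumrN; apply: eq_bigr => q _ /=; rewrite /yv mxE; ring.
  rewrite e1 e2; lra.
pose lin (v : 'cV[R]_d) := \sum_q a q * v q 0.
have Hval0 : lin x0 <= c := Hval x0 y0 Hy0 Hxy0.
have Hdelta : t * c < lin xv.
  move: Hb; rewrite !big_sumType /= big_ord1 [\sum_(i < r) _]big1 ?add0r; last by move=> i _; rewrite mulr0.
  have e : lin xv = - (\sum_(i < d) lam (inl (inl i)) * a i +
      \sum_(i < d) lam (inl (inr i)) * - a i).
    rewrite /lin -big_split -sumrN; apply: eq_bigr => q _ /=; rewrite /xv mxE; ring.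
  rewrite e -/t; lra.
pose delta := lin xv - t * c.
have dpos : 0 < delta by rewrite subr_gt0.
pose s := (c - lin x0 + 1) / delta.
have s_ge0 : 0 <= s by apply: divr_ge0; [lra | exact: ltW].
have sd : s * delta = c - lin x0 + 1 by rewrite /s mulfVK // gt_eqF.
pose D := 1 + s * t.
have Dpos : 0 < D by rewrite /D; have := mulr_ge0 s_ge0 t_ge0; lra.
pose X := D^-1 *: (x0 + s *: xv).
pose Y := D^-1 *: (y0 + s *: yv).
have HY : forall l, 0 <= Y l 0.
  move=> l; rewrite /Y !mxE; apply: mulr_ge0; first by rewrite invr_ge0 ltW.
  apply: addr_ge0; first exact: Hy0.
  by apply: mulr_ge0 => //; rewrite /yv mxE; exact: H0.
have HXY : E *m X + F *m Y = g.
  rewrite /X /Y -!scalemxAr !mulmxDr -!scalemxAr -scalerDr addrACA Hxy0 -scalerDr Hxyv.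
  rewrite scalerA -{1}(scale1r g) -scalerDl -/D scalerA mulVf ?scale1r //.
  by rewrite gt_eqF.
have HX : lin X <= c := Hval X Y HY HXY.
have linX : lin X = D^-1 * (lin x0 + s * lin xv).
  rewrite /lin mulrDr !mulr_sumr -big_split; apply: eq_bigr => q _ /=; rewrite /X !mxE; ring.
move: HX; rewrite linX (ler_pdivrMl _ _ Dpos) => H.
rewrite /delta in sd; rewrite /D in H.
exact: nra_key H sd.
Qed.

Lemma min_exists (P : nat -> Prop) : (exists n, P n) ->
  exists n, P n /\ forall m, P m -> (n <= m)%N.
Proof.
move=> [n Hn].
have H : exists n, `[< P n >] by exists n; apply/asboolP.
case: (ex_minnP H) => m /asboolP Pm Hmin.
by exists m; split => // k Pk; apply: Hmin; apply/asboolP.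
Qed.

Lemma sum_mulmx (R : realType) (k d' : nat) (u : 'I_k -> R) (M : 'M[R]_(k,d')) (v : 'cV[R]_d') :
  \sum_p u p * (M *m v) p 0 = \sum_q (\sum_p u p * M p q) * v q 0.
Proof.
rewrite sum_exch; apply: eq_bigr => p _; rewrite mxE.
by rewrite mulr_sumr; apply: eq_bigr => q _; rewrite mulrA.
Qed.

Lemma conv_vertex (R : realType) (d n : nat) (V : 'I_n -> 'cV[R]_d) j : conv_pts V (V j).
Proof.
exists 1%N, (fun _ => V j), (fun _ => 1); split.
- by move=> _; exists j.
- by move=> _; rewrite ler01.
- by rewrite big_ord1.
- by rewrite big_ord1 scale1r.
Qed.

Lemma PinK (R : realType) (d k r : nat) (E : 'M[R]_(k,d)) (F : 'M[R]_(k,r)) (g : 'cV[R]_k)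
  (z : 'cV[R]_d) :
  (forall w : 'cV[R]_d, exists x, EFproj E F g x /\ dot w z <= dot w x) -> EFproj E F g z.
Proof.
move=> H.
case: (@use1 R k r F (fun p => g p 0 - (E *m z) p 0)) => [[y [Hy HF]]|[u [Hu Hc]]].
  exists y; split => //; apply/matrixP => p j; rewrite (ord1 j) mxE HF.
  by rewrite addrC subrK.
exfalso.
have [x [[y [Hy Hxy]] Hle]] := H (\col_q \sum_p u p * E p q).
have Ex : forall p, (E *m x) p 0 = g p 0 - (F *m y) p 0.
  move=> p; have := congr1 (fun M : 'cV[R]_k => M p 0) Hxy; rewrite /= [in X in X = _ -> _]mxE => <-.
  by rewrite addrK.
have dz : dot (\col_q \sum_p u p * E p q) z = \sum_p u p * (E *m z) p 0.
  by rewrite sum_mulmx; apply: eq_bigr => q _; rewrite mxE.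
have dx : dot (\col_q \sum_p u p * E p q) x = \sum_p u p * g p 0 - \sum_p u p * (F *m y) p 0.
  rewrite -sumrB; under [RHS]eq_bigr do rewrite -mulrBr -Ex.
  by rewrite sum_mulmx; apply: eq_bigr => q _; rewrite mxE.
have Fy : 0 <= \sum_p u p * (F *m y) p 0.
  by rewrite sum_mulmx; apply: sumr_ge0 => l _; apply: mulr_ge0.
have : \sum_p u p * g p 0 - \sum_p u p * (E *m z) p 0 < 0.
  by rewrite -sumrB; under eq_bigr do rewrite -mulrBr.
move: Hle; rewrite dz dx; move: Fy; move: (\sum_p u p * g p 0) (\sum_p u p * (E *m z) p 0) (\sum_p u p * (F *m y) p 0).
move=> p1 p2 p3; lra.
Qed.

Lemma core (R : realType) (d m n : nat) (A : 'M[R]_(m,d)) (b' : 'cV[R]_m) (V : 'I_n -> 'cV[R]_d)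
  (Ps : 'cV[R]_d -> Prop)
  (approx : forall k r, 'M[R]_(k,d) -> 'M[R]_(k,r) -> 'cV[R]_k -> Prop) :
  (forall x, Ps x <-> conv_pts V x) ->
  (forall k r E F g, approx k r E F g <->
     ((forall z, Ps z -> EFproj E F g z) /\ (forall x, EFproj E F g x -> polyhedron A b' x))) ->
  (forall j, polyhedron A b' (V j)) ->
  exists rp r, [/\ is_nnrank (slack A b' V) rp,
    (exists k (E : 'M[R]_(k,d)) (F : 'M[R]_(k,r)) g, approx k r E F g) /\
    (forall k r' (E : 'M[R]_(k,d)) (F : 'M[R]_(k,r')) g, approx k r' E F g -> (r <= r')%N)
   & r = rp \/ r.+1 = rp].
Proof.
move=> HP Happ HV.
set S := slack A b' V.
have S_ge0 : forall i j, 0 <= S i j by move=> i j; rewrite /S mxE subr_ge0; exact: HV.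
have [rp [Hrp Hrpmin]] : exists rp, nn_factor S rp /\ forall r', nn_factor S r' -> (rp <= r')%N.
  apply: (@min_exists (fun r => nn_factor S r)); exists n, S, 1%:M; split => //; last by rewrite mulmx1.
  by move=> i j; rewrite mxE ler0n.
have [T [U [HT HU HTU]]] := Hrp.
have Hup : approx m rp A T b'.
  apply/Happ; split.
  - move=> z /HP [n' [v [l [Hv Hl Hl1 ->]]]].
    have [f Hf] : exists f : 'I_n' -> 'I_n, forall i, v i = V (f i).
      by apply: (@fin_all_exists _ (fun _ => 'I_n) (fun i j => v i = V j)) => i; have [j ->] := Hv i; exists j.
    exists (\sum_i l i *: col (f i) U); split.
      move=> p; rewrite summxE; apply: sumr_ge0 => i _; rewrite !mxE; exact: mulr_ge0.
    rewrite !mulmx_sumr -big_split /=.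
    transitivity (\sum_i l i *: b'); last by rewrite -scaler_suml Hl1 scale1r.
    apply: eq_bigr => i _; rewrite -!scalemxAr -scalerDr Hf; congr (_ *: _).
    apply/matrixP => p q; rewrite (ord1 q) mxE.
    rewrite (_ : (T *m col (f i) U) p 0 = S p (f i)); last first.
      by rewrite HTU !mxE; apply: eq_bigr => l0 _; rewrite !mxE.
    by rewrite /slack !mxE addrC subrK.
  - move=> x [y [Hy Hxy]] i.
    have := congr1 (fun M : 'cV[R]_m => M i 0) Hxy; rewrite /= [in X in X = _ -> _]mxE => <-.
    rewrite lerDl mxE; apply: sumr_ge0 => l _; exact: mulr_ge0.
have [r [[k [E [F [g Hr]]]] Hrmin]] : exists r, (exists k (E : 'M[R]_(k,d)) (F : 'M[R]_(k,r)) g,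
    approx k r E F g) /\ forall r', (exists k (E : 'M[R]_(k,d)) (F : 'M[R]_(k,r')) g,
    approx k r' E F g) -> (r <= r')%N.
  apply: (@min_exists (fun r => exists k (E : 'M[R]_(k,d)) (F : 'M[R]_(k,r)) g, approx k r E F g)).
  by exists rp, m, A, T, b'.
have Hle1 : (r <= rp)%N by apply: Hrmin; exists m, A, T, b'.
have Hle2 : (rp <= r.+1)%N.
  apply: Hrpmin.
  move/Happ: Hr => [HPK HKQ].
  case: (posnP n) => [n0|npos].
    exists 0, 0; split; [by move=> i j; rewrite mxE | by move=> i j; rewrite mxE|].
    apply/matrixP => i j.
    by exfalso; have := ltn_ord j; rewrite {2}n0.
  pose j0 := Ordinal npos.
  have HY : forall j, exists y : 'cV[R]_r, (forall l, 0 <= y l 0) /\ E *m V j + F *m y = g.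
    by move=> j; apply: HPK; apply/HP; exact: conv_vertex.
  have [Y HYj] := fin_all_exists HY.
  have Hu : forall i, exists u : 'I_k -> R, [/\ forall q, \sum_p u p * E p q = A i q,
     forall l, 0 <= \sum_p u p * F p l & \sum_p u p * g p 0 <= b' i 0].
    move=> i; have [Hy0 Hxy0] := HYj j0.
    apply: (@use2 R d k r E F g (fun q => A i q) (b' i 0) (V j0) (Y j0) Hy0 Hxy0) => x y Hy Hxy.
    by have := HKQ x (ex_intro _ y (conj Hy Hxy)) i; rewrite mxE.
  have [u Hui] := fin_all_exists Hu.
  exists (\matrix_(i, l) (if unlift ord0 l is Some l' then \sum_p u i p * F p l'
                          else b' i 0 - \sum_p u i p * g p 0)),
         (\matrix_(l, j) (if unlift ord0 l is Some l' then Y j l' 0 else 1)); split.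
  - move=> i l; rewrite mxE; case: (unliftP ord0 l) => [l'|] _.
      by have [_ H _] := Hui i; apply: H.
    by have [_ _ H] := Hui i; rewrite subr_ge0.
  - move=> l j; rewrite mxE; case: (unliftP ord0 l) => [l'|] _; last exact: ler01.
    by have [H _] := HYj j; apply: H.
  apply/matrixP => i j; rewrite !mxE big_ord_recl !mxE unlift_none mulr1.
  under [\sum_(i0 < r) _]eq_bigr do rewrite !mxE liftK.
  have [Hq _ _] := Hui i; have [_ Hxy] := HYj j.
  have EV : forall p, (E *m V j) p 0 = g p 0 - (F *m Y j) p 0.
    move=> p; have := congr1 (fun M : 'cV[R]_k => M p 0) Hxy.
    by rewrite /= [in X in X = _ -> _]mxE => <-; rewrite addrK.
  have -> : \sum_q A i q * V j q 0 = \sum_p u i p * g p 0 - \sum_p u i p * (F *m Y j) p 0.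
    rewrite -sumrB; under [RHS]eq_bigr do rewrite -mulrBr -EV.
    by rewrite sum_mulmx; apply: eq_bigr => q _; rewrite Hq.
  rewrite sum_mulmx.
  by rewrite opprB addrA addrAC.
exists rp, r; split => //.
- split; first by exists k, E, F, g.
  by move=> k' r' E' F' g' H; apply: Hrmin; exists k', E', F', g'.
- lia.
Qed.

Lemma dot_scale (R : realType) (d : nat) (w x : 'cV[R]_d) (c : R) :
  dot w (c *: x) = c * dot w x.
Proof. by rewrite /dot mulr_sumr; apply: eq_bigr => i _; rewrite mxE mulrCA. Qed.

Lemma dot_opp (R : realType) (d : nat) (w x : 'cV[R]_d) : dot (- w) x = - dot w x.
Proof. by rewrite /dot -sumrN; apply: eq_bigr => i _; rewrite mxE mulNr. Qed.

Lemma poly_scale (R : realType) (d m : nat) (A : 'M[R]_(m,d)) (b : 'cV[R]_m) (x : 'cV[R]_d) (c : R) :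
  0 < c -> polyhedron A b (c *: x) <-> polyhedron A (c^-1 *: b) x.
Proof.
move=> c0; split=> H i; have := H i; rewrite -scalemxAr !mxE.
  by rewrite ler_pdivlMl.
by rewrite ler_pdivlMl.
Qed.

Theorem theorem2 (R : realType) (L : seq bool -> Prop) (O : seq R -> Prop)
  (d : nat) (rho : R) :
  1 <= rho ->
  (* maximization *)
  (forall (m : nat) (A : 'M[R]_(m, d)) (b : 'cV[R]_m)
          (n : nat) (V : 'I_n -> 'cV[R]_d),
     (forall x, Qmax L O x <-> polyhedron A b x) ->
     (forall x, Pset L x <-> conv_pts V x) ->
     (forall x, Pset L x -> polyhedron A (rho *: b) x) ->
     exists (rp r : nat),
       [/\ is_nnrank (slack A (rho *: b) V) rp,
           min_EF_size_max d L O rho r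
         & r = rp \/ r.+1 = rp]) /\
  (* minimization *)
  (forall (m : nat) (A : 'M[R]_(m, d)) (b : 'cV[R]_m)
          (n : nat) (V : 'I_n -> 'cV[R]_d),
     (forall x, Qmin L O x <-> polyhedron A b x) ->
     (forall x, Pset L x <-> conv_pts V x) ->
     (forall x, Pset L x -> polyhedron A (rho^-1 *: b) x) ->
     exists (rp r : nat),
       [/\ is_nnrank (slack A (rho^-1 *: b) V) rp,
           min_EF_size_min d L O rho r
         & r = rp \/ r.+1 = rp]).
Proof.
move=> rho1.
have rho0 : 0 < rho by apply: lt_le_trans rho1; exact: ltr01.
have irho0 : 0 < rho^-1 by rewrite invr_gt0.
split.
- move=> m A b n V HQ HP HV.
  have HQs : forall x, polyhedron A (rho *: b) x <->
      (forall w, inO O w -> exists z, Pset L z /\ dot w x <= rho * dot w z).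
    move=> x; rewrite -{1}(invrK rho) -poly_scale // -HQ; split.
      move=> H w Hw; have [z [Hz Hle]] := H w Hw; exists z; split => //.
      by move: Hle; rewrite dot_scale ler_pdivrMl.
    move=> H w Hw; have [z [Hz Hle]] := H w Hw; exists z; split => //.
    by rewrite dot_scale ler_pdivrMl.
  have Hchar : forall k r (E : 'M[R]_(k,d)) (F : 'M[R]_(k,r)) g, approxEF_max L O rho E F g <->
     ((forall z, Pset L z -> EFproj E F g z) /\ (forall x, EFproj E F g x -> polyhedron A (rho *: b) x)).
  move=> k r E F g; split.
    move=> [Ha Hb]; split.
      by move=> z Hz; apply: PinK => w; exact: Ha.
    by move=> x Hx; apply/HQs => w Hw; exact: Hb.
  move=> [Ha Hb]; split.
    by move=> w z Hz; exists z; split => //; exact: Ha.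
  by move=> w Hw x Hx; apply: (proj1 (HQs x) (Hb x Hx)).
  have [rp [r [H1 H2 H3]]] := @core R d m n A (rho *: b) V (Pset L)
    (fun k r E F g => approxEF_max L O rho E F g) HP Hchar
    (fun j => HV _ (proj2 (HP _) (@conv_vertex R d n V j))).
  by exists rp, r.
- move=> m A b n V HQ HP HV.
  have HQs : forall x, polyhedron A (rho^-1 *: b) x <->
      (forall w, inO O w -> exists z, Pset L z /\ rho^-1 * dot w z <= dot w x).
    move=> x; rewrite -poly_scale // -HQ; split.
      move=> H w Hw; have [z [Hz Hle]] := H w Hw; exists z; split => //.
      by move: Hle; rewrite dot_scale ler_pdivrMl.
    move=> H w Hw; have [z [Hz Hle]] := H w Hw; exists z; split => //.
    by rewrite dot_scale -ler_pdivrMl.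
  have Hchar : forall k r (E : 'M[R]_(k,d)) (F : 'M[R]_(k,r)) g, approxEF_min L O rho E F g <->
     ((forall z, Pset L z -> EFproj E F g z) /\ (forall x, EFproj E F g x -> polyhedron A (rho^-1 *: b) x)).
  move=> k r E F g; split.
    move=> [Ha Hb]; split.
      move=> z Hz; apply: PinK => w; have [x [Hx Hle]] := Ha (- w) z Hz.
      by exists x; split => //; move: Hle; rewrite !dot_opp lerN2.
    by move=> x Hx; apply/HQs => w Hw; exact: Hb.
  move=> [Ha Hb]; split.
    by move=> w z Hz; exists z; split => //; exact: Ha.
  by move=> w Hw x Hx; apply: (proj1 (HQs x) (Hb x Hx)).
  have [rp [r [H1 H2 H3]]] := @core R d m n A (rho^-1 *: b) V (Pset L)
    (fun k r E F g => approxEF_min L O rho E F g) HP Hchar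
    (fun j => HV _ (proj2 (HP _) (@conv_vertex R d n V j))).
  by exists rp, r.
Qed.
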